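(* Let $N_t, N_m, N_e$ be positive integers with $N_e < N_t$, put $n = N_t - N_e$, $m = \min(n, N_m)$, $k = \max(n, N_m)$. Fix $g>0$, $r_s>0$ and positive coefficients $b_1,\dots,b_m$ with $b_m \le \dots \le b_1$ and $\sum_{l=1}^m b_l = r_s$. For $\eta>0$ define $\xi(x) = \frac{n}{\eta}\big((1+g\eta)^x-1\big)$, $\alpha_l = \Gamma_{inc}(\xi(r_s),k-l+1)$, $\beta_l = \Gamma_{inc}(\xi(b_l),k-l+1)$, and for $x>0$ $$f_l(x) = \Big((1+g\eta)^x - x g\eta(1+g\eta)^{x-1} - 1\Big)\frac{\xi(x)^{k-l}e^{-\xi(x)}/(k-l)!}{\Gamma_{inc}(\xi(x),k-l+1)}.$$ Let $U(\eta) = \prod_{l=1}^m \alpha_l\Big(1 - \prod_{l=1}^m\big[1 - \frac{\beta_l}{\alpha_l}\big]\Big)$ (the upper bound on the zero-forcing secrecy outage probability). Then $$-\eta\frac{d}{d\eta}\ln U(\eta) = \frac{n}{\eta}\sum_{l=1}^m\left[f_l(r_s) + \frac{\beta_l}{\alpha_l}\big(f_l(b_l)-f_l(r_s)\big)\frac{\prod_{j\ne l}\big(1-\frac{\beta_j}{\alpha_j}\big)}{1-\prod_{j=1}^m\big(1-\frac{\beta_j}{\alpha_j}\big)}\right],$$ and this quantity is the secrecy diversity gain estimate $\hat d_s^U(r_s,\eta)$ of the zero-forcing scheme.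
   Context: $\Gamma_{inc}(x,a) = \frac{1}{(a-1)!}\int_0^x t^{a-1}e^{-t}\,dt$ for $x\ge 0$ and positive integer $a$. The secrecy diversity gain associated with an error probability $P(\eta)$ at SNR $\eta$ is defined as $-\eta\,\partial \ln P/\partial\eta$, with the secrecy rate $R_s = r_s\ln(1+g\eta)$ (fixed $r_s$). Products $\prod_{j\neq l}$ range over $j\in\{1,\dots,m\}\setminus\{l\}$. *)

(* Defs.v *)
From Stdlib Require Import Reals Factorial.
From Coquelicot Require Import Coquelicot.
Open Scope R_scope.

Fixpoint prodR (f : nat -> R) (m : nat) : R :=
  match m with O => 1 | S p => prodR f p * f (S p) end.
Fixpoint sumR (f : nat -> R) (m : nat) : R :=
  match m with O => 0 | S p => sumR f p + f (S p) end.
Fixpoint prod_except (f : nat -> R) (m l : nat) : R :=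
  match m with
  | O => 1
  | S p => prod_except f p l * (if Nat.eqb (S p) l then 1 else f (S p))
  end.

Definition Gamma_inc (x : R) (a : nat) : R :=
  / INR (Factorial.fact (a - 1)) * RInt (fun t => t ^ (a - 1) * exp (- t)) 0 x.

Definition secrecy_diversity_gain (P : R -> R) (eta : R) : R :=
  - eta * Derive (fun e => ln (P e)) eta.

Section ZF.
Variables (Nt Nm Ne : nat) (g rs : R) (b : nat -> R).

Definition nZ : nat := (Nt - Ne)%nat.
Definition mZ : nat := Nat.min nZ Nm.
Definition kZ : nat := Nat.max nZ Nm.

Definition xi (eta x : R) : R := INR nZ / eta * (Rpower (1 + g * eta) x - 1).
Definition alphaZ (eta : R) (l : nat) : R := Gamma_inc (xi eta rs) (kZ - l + 1).
Definition betaZ (eta : R) (l : nat) : R := Gamma_inc (xi eta (b l)) (kZ - l + 1).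

Definition fZ (eta : R) (l : nat) (x : R) : R :=
  (Rpower (1 + g * eta) x - x * g * eta * Rpower (1 + g * eta) (x - 1) - 1)
  * (xi eta x ^ (kZ - l) * exp (- xi eta x) / INR (Factorial.fact (kZ - l)))
  / Gamma_inc (xi eta x) (kZ - l + 1).

Definition ratioZ (eta : R) (l : nat) : R := 1 - betaZ eta l / alphaZ eta l.

Definition UZ (eta : R) : R :=
  prodR (alphaZ eta) mZ * (1 - prodR (ratioZ eta) mZ).

Definition dsU_rhs (eta : R) : R :=
  INR nZ / eta *
  sumR (fun l => fZ eta l rs
          + betaZ eta l / alphaZ eta l * (fZ eta l (b l) - fZ eta l rs)
            * prod_except (ratioZ eta) mZ l / (1 - prodR (ratioZ eta) mZ)) mZ.
End ZF.

(* Main.v *)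
Require Import Defs.
From Stdlib Require Import Reals Lra Lia Psatz Factorial.
From Coquelicot Require Import Coquelicot.
Open Scope R_scope.

Lemma sumR_ext f g m : (forall l, (1 <= l <= m)%nat -> f l = g l) -> sumR f m = sumR g m.
Proof. induction m; cbn [prodR prod_except sumR]; intros H; [reflexivity|]. rewrite IHm, H; [reflexivity|lia|]. intros; apply H; lia. Qed.
Lemma sumR_plus f g m : sumR (fun l => f l + g l) m = sumR f m + sumR g m.
Proof. induction m; cbn [prodR prod_except sumR]; [lra|]. rewrite IHm; lra. Qed.
Lemma sumR_scal c f m : sumR (fun l => c * f l) m = c * sumR f m.
Proof. induction m; cbn [prodR prod_except sumR]; [lra|]. rewrite IHm; lra. Qed.
Lemma sumR_scalr c f m : sumR (fun l => f l * c) m = sumR f m * c.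
Proof. induction m; cbn [sumR]; [lra|]. rewrite IHm; lra. Qed.
Lemma sumR_ge_term f m l : (forall j, (1 <= j <= m)%nat -> 0 <= f j) -> (1 <= l <= m)%nat -> f l <= sumR f m.
Proof. induction m; cbn [prodR prod_except sumR]; intros H Hl; [lia|].
  destruct (Nat.eq_dec l (S m)) as [->|Hn].
  - assert (0 <= sumR f m). { clear IHm Hl. induction m; cbn [prodR prod_except sumR]; [lra|].
      assert (0 <= f (S m)) by (apply H; lia). assert (0 <= sumR f m) by (apply IHm; intros; apply H; lia). lra. }
    lra.
  - assert (f l <= sumR f m) by (apply IHm; [intros; apply H|]; lia).
    assert (0 <= f (S m)) by (apply H; lia). lra. Qed.
Lemma prod_except_big f m l : (m < l)%nat -> prod_except f m l = prodR f m.
Proof. induction m; cbn [prodR prod_except sumR]; intros; [reflexivity|]. rewrite IHm by lia.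
  destruct (Nat.eqb (S m) l) eqn:E; [apply Nat.eqb_eq in E; lia|reflexivity]. Qed.
Lemma prod_except_split f m l : (1 <= l <= m)%nat -> prodR f m = prod_except f m l * f l.
Proof. induction m; cbn [prodR prod_except sumR]; intros Hl; [lia|].
  destruct (Nat.eq_dec l (S m)) as [->|Hn].
  - rewrite Nat.eqb_refl, prod_except_big by lia. ring.
  - rewrite IHm by lia. destruct (Nat.eqb (S m) l) eqn:E; [apply Nat.eqb_eq in E; lia|]. ring. Qed.
Lemma prodR_pos f m : (forall l, (1 <= l <= m)%nat -> 0 < f l) -> 0 < prodR f m.
Proof. induction m; cbn [prodR prod_except sumR]; intros H; [lra|]. apply Rmult_lt_0_compat; [apply IHm; intros; apply H; lia| apply H; lia]. Qed.
Lemma prodR_01 f m : (forall l, (1 <= l <= m)%nat -> 0 <= f l < 1) -> 0 <= prodR f m <= 1.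
Proof. induction m; cbn [prodR prod_except sumR]; intros H; [lra|].
  assert (0 <= prodR f m <= 1) by (apply IHm; intros; apply H; lia).
  assert (0 <= f (S m) < 1) by (apply H; lia). nra. Qed.
Lemma prodR_lt1 f m : (1 <= m)%nat -> (forall l, (1 <= l <= m)%nat -> 0 <= f l < 1) -> prodR f m < 1.
Proof. destruct m; cbn [prodR prod_except sumR]; intros; [lia|].
  assert (0 <= prodR f m <= 1) by (apply prodR_01; intros; apply H0; lia).
  assert (0 <= f (S m) < 1) by (apply H0; lia). nra. Qed.

Lemma is_derive_eq (f : R -> R) x l l' : is_derive f x l -> l = l' -> is_derive f x l'.
Proof. intros H ->; exact H. Qed.

Lemma prodR_derive (F : R -> nat -> R) (dF : nat -> R) m x :
  (forall l, (1 <= l <= m)%nat -> is_derive (fun e => F e l) x (dF l)) ->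
  is_derive (fun e => prodR (F e) m) x (sumR (fun l => dF l * prod_except (F x) m l) m).
Proof. induction m; cbn [prodR prod_except sumR]; intros H.
  - apply is_derive_eq with 0; [apply (is_derive_const 1)|reflexivity].
  - eapply is_derive_eq. { apply (is_derive_mult (fun e => prodR (F e) m) (fun e => F e (S m))).
      apply IHm; intros; apply H; lia. apply H; lia. intros; apply Rmult_comm. }
    rewrite Nat.eqb_refl, prod_except_big by lia.
    unfold plus, mult; simpl. unfold mult; simpl.
    rewrite (sumR_ext (fun l => dF l * prod_except (F x) (S m) l) (fun l => (dF l * prod_except (F x) m l) * F x (S m))).
    + rewrite sumR_scalr. ring.
    + intros l Hl. cbn [prod_except]. destruct (Nat.eqb (S m) l) eqn:E; [apply Nat.eqb_eq in E; lia|]. ring.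
Qed.

Definition gi (a : nat) (t : R) := t ^ (a - 1) * exp (- t).
Lemma gi_cont a t : continuous (gi a) t.
Proof. apply (ex_derive_continuous (V:=R_NormedModule) (gi a)). unfold gi. auto_derive. auto. Qed.
Lemma gi_exRInt a u v : ex_RInt (gi a) u v.
Proof. apply (ex_RInt_continuous (V:=R_CompleteNormedModule)). intros; apply gi_cont. Qed.

Lemma Gi_derive (h : R -> R) dh x a : is_derive h x dh ->
  is_derive (fun e => Gamma_inc (h e) a) x
    (/ INR (Factorial.fact (a - 1)) * ((h x ^ (a - 1) * exp (- h x)) * dh)).
Proof. intros Hh. unfold Gamma_inc. apply is_derive_scal.
  eapply is_derive_eq.
  { apply (is_derive_comp (fun y => RInt (fun t => t ^ (a - 1) * exp (- t)) 0 y) h); [|exact Hh].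
    apply (is_derive_RInt (gi a) _ 0).
    - apply filter_forall. intros y. apply (RInt_correct (V:=R_CompleteNormedModule)), gi_exRInt.
    - apply gi_cont. }
  unfold scal; simpl; unfold mult; simpl; unfold gi; ring.
Qed.

Lemma Gi_pos x a : 0 < x -> 0 < Gamma_inc x a.
Proof. intros Hx. unfold Gamma_inc. apply Rmult_lt_0_compat.
  apply Rinv_0_lt_compat, lt_0_INR, lt_O_fact.
  apply (RInt_gt_0 (gi a)); auto. intros t Ht. unfold gi. apply Rmult_lt_0_compat.
  apply pow_lt; lra. apply exp_pos. intros; apply gi_cont. Qed.

Lemma Gi_mono x y a : 0 <= x <= y -> Gamma_inc x a <= Gamma_inc y a.
Proof. intros Hxy. unfold Gamma_inc. apply Rmult_le_compat_l.
  left; apply Rinv_0_lt_compat, lt_0_INR, lt_O_fact.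
  change (RInt (fun t => t ^ (a - 1) * exp (- t)) 0 y) with (RInt (gi a) 0 y).
  rewrite <- (RInt_Chasles (V:=R_CompleteNormedModule) (gi a) 0 x y) by apply gi_exRInt.
  unfold plus; simpl.
  assert (0 <= RInt (gi a) x y). { apply RInt_ge_0. lra. apply gi_exRInt.
   intros t Ht. unfold gi. apply Rmult_le_pos. apply pow_le; lra. left; apply exp_pos. }
  change (RInt (fun t => t ^ (a - 1) * exp (- t)) 0 x) with (RInt (gi a) 0 x). lra. Qed.

Lemma xi_derive Nt Ne g eta x : 0 < g -> 0 < eta ->
  is_derive (fun e => xi Nt Ne g e x) eta
   (- INR (nZ Nt Ne) / eta ^ 2 * (Rpower (1 + g * eta) x - 1)
    + INR (nZ Nt Ne) / eta * (x * g * Rpower (1 + g * eta) (x - 1))).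
Proof. intros Hg He. unfold xi, Rpower. auto_derive.
  - repeat split; try nra; try lra.
  - replace ((x - 1) * ln (1 + g * eta)) with (x * ln (1 + g * eta) + - ln (1 + g * eta)) by ring.
    rewrite exp_plus, exp_Ropp, exp_ln by nra. field. split; nra.
Qed.

Lemma xi_pos Nt Ne g eta x : (Ne < Nt)%nat -> 0 < g -> 0 < eta -> 0 < x -> 0 < xi Nt Ne g eta x.
Proof. intros HN Hg He Hx. unfold xi. apply Rmult_lt_0_compat.
  apply Rdiv_lt_0_compat; [apply lt_0_INR; unfold nZ; lia| lra].
  rewrite <- (Rpower_O (1 + g * eta)) at 2 by nra.
  assert (Rpower (1 + g * eta) 0 < Rpower (1 + g * eta) x) by (apply Rpower_lt; nra). lra. Qed.

Definition dG Nt Nm Ne g eta l x :=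
  / INR (fact (kZ Nt Nm Ne - l + 1 - 1)) * ((xi Nt Ne g eta x ^ (kZ Nt Nm Ne - l + 1 - 1) * exp (- xi Nt Ne g eta x)) *
   (- INR (nZ Nt Ne) / eta ^ 2 * (Rpower (1 + g * eta) x - 1)
    + INR (nZ Nt Ne) / eta * (x * g * Rpower (1 + g * eta) (x - 1)))).

Lemma G_der Nt Nm Ne g eta l x : 0 < g -> 0 < eta ->
  is_derive (fun e => Gamma_inc (xi Nt Ne g e x) (kZ Nt Nm Ne - l + 1)) eta (dG Nt Nm Ne g eta l x).
Proof. intros. apply (Gi_derive (fun e => xi Nt Ne g e x)). apply xi_derive; assumption. Qed.

Lemma G_id Nt Nm Ne g eta l x : (Ne < Nt)%nat -> 0 < g -> 0 < eta -> 0 < x ->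
   dG Nt Nm Ne g eta l x = - (INR (nZ Nt Ne) / eta * fZ Nt Nm Ne g eta l x * Gamma_inc (xi Nt Ne g eta x) (kZ Nt Nm Ne - l + 1)) / eta.
Proof. intros HN Hg He Hx.
  assert (HG := Gi_pos _ (kZ Nt Nm Ne - l + 1) (xi_pos Nt Ne g eta x HN Hg He Hx)).
  unfold dG. replace (kZ Nt Nm Ne - l + 1 - 1)%nat with (kZ Nt Nm Ne - l)%nat by lia.
  unfold fZ. field. split; [apply not_0_INR, fact_neq_0|split; lra].
Qed.

Theorem corollary1 (Nt Nm Ne : nat) (g rs : R) (b : nat -> R) (eta : R) :
  (0 < Nt)%nat -> (0 < Nm)%nat -> (0 < Ne)%nat -> (Ne < Nt)%nat ->
  0 < g -> 0 < rs ->
  (forall l, (1 <= l <= mZ Nt Nm Ne)%nat -> 0 < b l) ->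
  (forall l, (1 <= l < mZ Nt Nm Ne)%nat -> b (S l) <= b l) ->
  sumR b (mZ Nt Nm Ne) = rs ->
  0 < eta ->
  ex_derive (fun e => ln (UZ Nt Nm Ne g rs b e)) eta /\
  secrecy_diversity_gain (UZ Nt Nm Ne g rs b) eta = dsU_rhs Nt Nm Ne g rs b eta.
Proof.
  intros HNt HNm HNe HN Hg Hrs Hb _ Hsum He.
  set (m := mZ Nt Nm Ne).
  assert (Hm : (1 <= m)%nat) by (unfold m, mZ, nZ; lia).
  assert (Hbr : forall l, (1 <= l <= m)%nat -> b l <= rs).
  { intros l Hl. rewrite <- Hsum. apply sumR_ge_term; [|exact Hl]. intros; left; apply Hb; auto. }
  set (A := alphaZ Nt Nm Ne g rs eta). set (B := betaZ Nt Nm Ne g b eta).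
  set (r := ratioZ Nt Nm Ne g rs b eta).
  set (N := INR (nZ Nt Ne)).
  assert (HA : forall l, 0 < A l).
  { intros l. apply Gi_pos, xi_pos; auto. }
  assert (HB : forall l, (1 <= l <= m)%nat -> 0 < B l).
  { intros l Hl. apply Gi_pos, xi_pos; auto. }
  assert (HBA : forall l, (1 <= l <= m)%nat -> B l <= A l).
  { intros l Hl. apply Gi_mono. split. left; apply xi_pos; auto.
    unfold xi. apply Rmult_le_compat_l.
    left; apply Rdiv_lt_0_compat; [apply lt_0_INR; unfold nZ; lia| lra].
    assert (Rpower (1 + g * eta) (b l) <= Rpower (1 + g * eta) rs) by (apply Rle_Rpower; [nra|auto]). lra. }
  assert (Hr : forall l, (1 <= l <= m)%nat -> 0 <= r l < 1).
  { intros l Hl. unfold r, ratioZ. fold A B. specialize (HA l). specialize (HB l Hl). specialize (HBA l Hl).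
    assert (B l / A l <= 1). { unfold Rdiv. apply Rle_trans with (A l * / A l).
      apply Rmult_le_compat_r; [left; apply Rinv_0_lt_compat; lra | lra]. rewrite Rinv_r; lra. }
    assert (0 < B l / A l) by (apply Rdiv_lt_0_compat; lra). lra. }
  assert (HP : prodR r m < 1) by (apply prodR_lt1; auto).
  assert (HPA : 0 < prodR A m) by (apply prodR_pos; auto).
  set (dA := fun l => dG Nt Nm Ne g eta l rs).
  set (dB := fun l => dG Nt Nm Ne g eta l (b l)).
  set (dr := fun l => - ((dB l * A l - B l * dA l) / A l ^ 2)).
  assert (HdA : forall l, is_derive (fun e => alphaZ Nt Nm Ne g rs e l) eta (dA l)).
  { intros l. apply G_der; auto. }
  assert (HdB : forall l, is_derive (fun e => betaZ Nt Nm Ne g b e l) eta (dB l)).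
  { intros l. apply G_der; auto. }
  assert (Hdr : forall l, is_derive (fun e => ratioZ Nt Nm Ne g rs b e l) eta (dr l)).
  { intros l. unfold ratioZ. eapply is_derive_eq.
    apply (is_derive_minus (fun _ => 1) (fun e => betaZ Nt Nm Ne g b e l / alphaZ Nt Nm Ne g rs e l)).
    apply is_derive_const. apply is_derive_div; [apply HdB|apply HdA|]. fold A; specialize (HA l); lra.
    unfold minus, zero, plus, opp; simpl. unfold dr. fold A B. field. specialize (HA l); lra. }
  set (SA := sumR (fun l => dA l * prod_except A m l) m).
  set (SR := sumR (fun l => dr l * prod_except r m l) m).
  assert (HU : is_derive (UZ Nt Nm Ne g rs b) eta (SA * (1 - prodR r m) - prodR A m * SR)).
  { unfold UZ. eapply is_derive_eq.
    apply (is_derive_mult (fun e => prodR (alphaZ Nt Nm Ne g rs e) (mZ Nt Nm Ne))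
             (fun e => 1 - prodR (ratioZ Nt Nm Ne g rs b e) (mZ Nt Nm Ne))).
    apply prodR_derive. intros; apply HdA.
    apply (is_derive_minus (fun _ => 1) (fun e => prodR (ratioZ Nt Nm Ne g rs b e) (mZ Nt Nm Ne))).
    apply is_derive_const. apply prodR_derive. intros; apply Hdr.
    intros; apply Rmult_comm.
    unfold minus, zero, plus, opp, mult; simpl. unfold SA, SR. fold A r m. ring. }
  assert (HU0 : 0 < UZ Nt Nm Ne g rs b eta).
  { unfold UZ. fold A r m. apply Rmult_lt_0_compat; lra. }
  assert (Hln : is_derive (fun e => ln (UZ Nt Nm Ne g rs b e)) eta
     ((SA * (1 - prodR r m) - prodR A m * SR) / UZ Nt Nm Ne g rs b eta)).
  { eapply is_derive_eq. apply (is_derive_comp ln (UZ Nt Nm Ne g rs b)); [|exact HU].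
    apply is_derive_Reals. apply derivable_pt_lim_ln. exact HU0.
    unfold scal; simpl; unfold mult; simpl. field. lra. }
  split. { eexists; exact Hln. }
  unfold secrecy_diversity_gain.
  replace (Derive (fun e => ln (UZ Nt Nm Ne g rs b e)) eta) with
     ((SA * (1 - prodR r m) - prodR A m * SR) / UZ Nt Nm Ne g rs b eta)
    by (symmetry; apply is_derive_unique, Hln).
  unfold UZ, dsU_rhs. fold A r m N. fold B.
  transitivity ((-eta/prodR A m)*SA + (eta/(1-prodR r m))*SR); [field; lra|].
  rewrite sumR_plus, Rmult_plus_distr_l, <- !sumR_scal. unfold SA, SR. rewrite <- !sumR_scal.
  f_equal; apply sumR_ext; intros l Hl.
  - assert (Hs := prod_except_split A m l Hl). rewrite Hs in HPA |- *.
    assert (HAl := HA l).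
    assert (prod_except A m l <> 0) by (intro Hz; rewrite Hz in HPA; lra).
    unfold dA. rewrite G_id by auto.
    change (Gamma_inc (xi Nt Ne g eta rs) (kZ Nt Nm Ne - l + 1)) with (A l). fold N.
    field. lra.
  - assert (HAl := HA l). assert (Hbl := Hb l Hl).
    unfold dr, dA, dB. rewrite !G_id by auto.
    change (Gamma_inc (xi Nt Ne g eta rs) (kZ Nt Nm Ne - l + 1)) with (A l).
    change (Gamma_inc (xi Nt Ne g eta (b l)) (kZ Nt Nm Ne - l + 1)) with (B l). fold N.
    field. lra.
Qed.
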